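(* Let $A,B,S\in\mathbb T$ and let $\boldsymbol\mu$ be a ratio set that witnesses $B$ or witnesses $S$. If $A\prec^{\boldsymbol\mu}B$, then $AS\prec^{\boldsymbol\mu}BS$. If $A\preccurlyeq^{\boldsymbol\mu}B$, then $AS\preccurlyeq^{\boldsymbol\mu}BS$.
   Context: $\mathbb T$ is the field of real grid-based transseries over the totally ordered group $\mathfrak G$ of transmonomials; $\operatorname{mag}T$ is the dominant monomial of $T\ne0$. A ratio set is a finite $\boldsymbol\mu\subset\{\mathfrak g\in\mathfrak G:\mathfrak g\prec1\}$; $\boldsymbol\mu^*$ (resp. $\boldsymbol\mu^+$) is the set of products of zero or more (resp. one or more) elements of $\boldsymbol\mu$. Monomials: $\mathfrak m\preccurlyeq^{\boldsymbol\mu}\mathfrak n$ iff $\mathfrak m/\mathfrak n\in\boldsymbol\mu^*$, $\mathfrak m\prec^{\boldsymbol\mu}\mathfrak n$ iff $\mathfrak m/\mathfrak n\in\boldsymbol\mu^+$. Transseries: $A\prec^{\boldsymbol\mu}B$ (resp. $\preccurlyeq^{\boldsymbol\mu}$) iff every $\mathfrak a\in\operatorname{supp}A$ satisfies $\mathfrak a\prec^{\boldsymbol\mu}\mathfrak b$ (resp. $\preccurlyeq^{\boldsymbol\mu}$) for some $\mathfrak b\in\operatorname{supp}B$. $\boldsymbol\mu$ witnesses nonzero $T$ iff $\operatorname{supp}T\subseteq(\operatorname{mag}T)\boldsymbol\mu^*$. *)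

(* Defs.v *)
From HB Require Import structures.
From mathcomp Require Import all_boot all_order all_algebra.
From mathcomp Require Import boolp classical_sets functions fsbigop reals.
Set Implicit Arguments. Unset Strict Implicit. Unset Printing Implicit Defensive.
Import Order.TTheory GRing.Theory Num.Theory.
Local Open Scope ring_scope.
Local Open Scope classical_set_scope.

(* The monomial group is written ADDITIVELY: monomial product m*n is m + n,
   the monomial 1 is 0, and m/n is m - n.  [lt m n] is  m ≺ n. *)
Section Transseries.
Variables (G : zmodType) (lt : rel G).

Definition ordered_group : Prop :=
  [/\ (forall m, ~~ lt m m),
      (forall m n p, lt m n -> lt n p -> lt m p),
      (forall m n, [\/ lt m n, m = n | lt n m]) &
      (forall m n p, lt m n -> lt (m + p) (n + p))].

Definition ratio_set (mu : seq G) : Prop := all (fun g => lt g 0) mu.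

Definition in_star (mu : seq G) (g : G) : Prop :=
  exists s : seq G, all (fun x => x \in mu) s /\ g = \sum_(x <- s) x.
Definition in_plus (mu : seq G) (g : G) : Prop :=
  exists s : seq G, s != [::] /\ all (fun x => x \in mu) s /\ g = \sum_(x <- s) x.

Variable R : realType.

Definition supp (T : G -> R) : set G := [set m | T m != 0].

Definition grid_based (T : G -> R) : Prop :=
  exists (ms mu : seq G), ratio_set mu /\
    forall g, T g != 0 -> exists2 m, m \in ms & in_star mu (g - m).

(* product of series (the sum is finite for grid-based series) *)
Definition ser_mul (A B : G -> R) : G -> R :=
  fun g => \sum_(p \in [set p : G * G | p.1 + p.2 = g]) (A p.1 * B p.2).

Definition is_mag (T : G -> R) (m : G) : Prop :=
  T m != 0 /\ forall n, T n != 0 -> lt n m || (n == m).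
Definition mag (T : G -> R) : G := xget 0 (is_mag T).

Definition witnesses (mu : seq G) (T : G -> R) : Prop :=
  (exists g, T g != 0) /\ forall n, T n != 0 -> in_star mu (n - mag T).

Definition mle (mu : seq G) (m n : G) : Prop := in_star mu (m - n).
Definition mlt (mu : seq G) (m n : G) : Prop := in_plus mu (m - n).

Definition sle (mu : seq G) (A B : G -> R) : Prop :=
  forall a, A a != 0 -> exists b, B b != 0 /\ mle mu a b.
Definition slt (mu : seq G) (A B : G -> R) : Prop :=
  forall a, A a != 0 -> exists b, B b != 0 /\ mlt mu a b.
End Transseries.

(* Main.v *)
Require Import Defs.
From HB Require Import structures.
From mathcomp Require Import all_boot all_order all_algebra.
From mathcomp Require Import boolp classical_sets functions fsbigop reals.
Set Implicit Arguments. Unset Strict Implicit. Unset Printing Implicit Defensive.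
Import Order.TTheory GRing.Theory Num.Theory.
Local Open Scope ring_scope.

Definition gle (G : zmodType) (lt : rel G) (a b : G) := lt a b || (a == b).

Lemma og_irr (G : zmodType) (lt : rel G) : ordered_group lt -> forall m, ~~ lt m m.
Proof. by case. Qed.
Lemma og_trans (G : zmodType) (lt : rel G) : ordered_group lt ->
  forall m n p, lt m n -> lt n p -> lt m p.
Proof. by case. Qed.
Arguments og_trans {G lt} og {m n p}.
Lemma og_tri (G : zmodType) (lt : rel G) : ordered_group lt ->
  forall m n, [\/ lt m n, m = n | lt n m].
Proof. by case. Qed.
Lemma og_addr (G : zmodType) (lt : rel G) : ordered_group lt ->
  forall m n p, lt m n -> lt (m + p) (n + p).
Proof. by case. Qed.
Lemma og_addl (G : zmodType) (lt : rel G) : ordered_group lt ->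
  forall m n p, lt m n -> lt (p + m) (p + n).
Proof. by move=> og m n p h; rewrite ![p + _]addrC; apply: og_addr. Qed.
Lemma og_addrE (G : zmodType) (lt : rel G) : ordered_group lt ->
  forall m n p, lt (m + p) (n + p) = lt m n.
Proof.
move=> og m n p; apply/idP/idP; last exact: og_addr.
by move=> /(og_addr og (-p)); rewrite !addrK.
Qed.
Lemma og_sub0 (G : zmodType) (lt : rel G) : ordered_group lt ->
  forall a b, lt (a - b) 0 = lt a b.
Proof. by move=> og a b; rewrite -(og_addrE og _ _ b) subrK add0r. Qed.
Lemma og_0sub (G : zmodType) (lt : rel G) : ordered_group lt ->
  forall a b, lt 0 (a - b) = lt b a.
Proof. by move=> og a b; rewrite -(og_addrE og _ _ b) subrK add0r. Qed.
Lemma gle_trans (G : zmodType) (lt : rel G) : ordered_group lt ->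
  forall a b c, gle lt a b -> gle lt b c -> gle lt a c.
Proof.
move=> og a b c /orP[h|/eqP->] // /orP[h'|/eqP<-]; rewrite /gle ?h //.
by rewrite (og_trans og h h').
Qed.
Lemma lt_gle_trans (G : zmodType) (lt : rel G) : ordered_group lt ->
  forall a b c, lt a b -> gle lt b c -> lt a c.
Proof. by move=> og a b c h /orP[h'|/eqP<-] //; exact: (og_trans og h h'). Qed.
Lemma gle_lt_trans (G : zmodType) (lt : rel G) : ordered_group lt ->
  forall a b c, gle lt a b -> lt b c -> lt a c.
Proof. by move=> og a b c /orP[h|/eqP->] h' //; exact: (og_trans og h h'). Qed.
Lemma gle_add (G : zmodType) (lt : rel G) : ordered_group lt ->
  forall a b c d, gle lt a b -> gle lt c d -> gle lt (a + c) (b + d).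
Proof.
move=> og a b c d h1 h2; apply: (gle_trans og (b := b + c)).
  by case/orP: h1 => [h|/eqP->]; rewrite /gle ?eqxx ?orbT // og_addr.
by case/orP: h2 => [h|/eqP->]; rewrite /gle ?eqxx ?orbT // og_addl.
Qed.
Lemma gle_lt_add (G : zmodType) (lt : rel G) : ordered_group lt ->
  forall a b c d, gle lt a b -> lt c d -> lt (a + c) (b + d).
Proof.
move=> og a b c d h1 h2; apply: (gle_lt_trans og (b := b + c)).
  by case/orP: h1 => [h|/eqP->]; rewrite /gle ?eqxx ?orbT // og_addr.
exact: og_addl.
Qed.
Lemma notlt_gle (G : zmodType) (lt : rel G) : ordered_group lt ->
  forall a b, ~~ lt a b -> gle lt b a.
Proof.
move=> og a b h; case: (og_tri og a b) => [h'|->|h']; rewrite /gle ?eqxx ?orbT //.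
  by rewrite h' in h.
by rewrite h'.
Qed.
Lemma gle_antisym (G : zmodType) (lt : rel G) : ordered_group lt ->
  forall a b, gle lt a b -> gle lt b a -> a = b.
Proof.
move=> og a b /orP[h|/eqP//] /orP[h'|/eqP//].
by have := og_irr og a; rewrite (og_trans og h h').
Qed.
Lemma gle_refl (G : zmodType) (lt : rel G) a : gle lt a a.
Proof. by rewrite /gle eqxx orbT. Qed.

Lemma star0 (G : zmodType) (mu : seq G) : in_star mu 0.
Proof. by exists [::]; rewrite big_nil. Qed.
Lemma starD (G : zmodType) (mu : seq G) a b :
  in_star mu a -> in_star mu b -> in_star mu (a + b).
Proof.
move=> [s [hs ->]] [t [ht ->]]; exists (s ++ t); rewrite all_cat hs ht big_cat.
by [].
Qed.
Lemma plusD (G : zmodType) (mu : seq G) a b :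
  in_plus mu a -> in_star mu b -> in_plus mu (a + b).
Proof.
move=> [s [s0 [hs ->]]] [t [ht ->]]; exists (s ++ t); rewrite all_cat hs ht big_cat.
by split=> //; case: s s0 {hs}.
Qed.
Lemma plus_star (G : zmodType) (mu : seq G) a : in_plus mu a -> in_star mu a.
Proof. by move=> [s [_ h]]; exists s. Qed.
Lemma star_le0 (G : zmodType) (lt : rel G) (mu : seq G) : ordered_group lt ->
  ratio_set lt mu -> forall g, in_star mu g -> gle lt g 0.
Proof.
move=> og rs g [s [hs ->]]; elim: s hs => [|x s IH] /=; first by rewrite big_nil gle_refl.
move=> /andP[xm hs]; rewrite big_cons.
have h1 : gle lt x 0 by rewrite /gle (allP rs x xm).
by have := gle_add og h1 (IH hs); rewrite addr0.
Qed.
Arguments gle_trans {G lt} og {a b c}.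
Arguments lt_gle_trans {G lt} og {a b c}.
Arguments gle_lt_trans {G lt} og {a b c}.
Arguments gle_add {G lt} og {a b c d}.
Arguments gle_lt_add {G lt} og {a b c d}.
Arguments gle_antisym {G lt} og {a b}.
Arguments notlt_gle {G lt} og {a b}.


Lemma star_cons (G : zmodType) (x : G) nu g :
  in_star (x :: nu) g -> exists k : nat, in_star nu (g - x *+ k).
Proof.
move=> [s [hs ->]]; elim: s hs => [|y s IH] /=.
  by move=> _; exists 0%N; rewrite big_nil subrr; apply: star0.
move=> /andP[]; rewrite inE => /orP[/eqP-> | ynu] /IH [k hk].
  by exists k.+1; rewrite big_cons mulrS opprD addrACA subrr add0r.
exists k; rewrite big_cons -addrA; apply: starD => //.
by exists [:: y]; rewrite /= ynu big_seq1.
Qed.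

Lemma star_sub (G : zmodType) (nu nu2 : seq G) g :
  {subset nu <= nu2} -> in_star nu g -> in_star nu2 g.
Proof.
move=> sub [s [hs ->]]; exists s; split => //.
by apply/allP => y /(allP hs) /sub.
Qed.

Lemma star1 (G : zmodType) (nu : seq G) x : x \in nu -> in_star nu x.
Proof. by move=> h; exists [:: x]; rewrite /= h big_seq1. Qed.

Lemma star_natmul (G : zmodType) (nu : seq G) x k :
  in_star nu x -> in_star nu (x *+ k).
Proof.
move=> h; elim: k => [|k IH]; first by rewrite mulr0n; apply: star0.
by rewrite mulrS; apply: starD.
Qed.

Lemma tail_min (k : nat -> nat) i :
  exists j, (i < j)%N /\ forall j', (i < j')%N -> (k j <= k j')%N.
Proof.
apply: contrapT => hn.
have H : forall j, (i < j)%N -> exists j', (i < j')%N /\ (k j' < k j)%N.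
  move=> j ij; apply: contrapT => hj; apply: hn; exists j; split => // j' ij'.
  by rewrite leqNgt; apply/negP => hlt; apply: hj; exists j'.
suff : forall v j, (i < j)%N -> (k j <= v)%N -> False.
  by move=> /(_ (k i.+1) i.+1 (ltnSn i) (leqnn _)).
elim=> [|v IH] j ij hv; have [j' [ij' hj']] := H j ij.
  by move: (leq_trans hj' hv).
by apply: (IH j' ij'); rewrite -ltnS (leq_trans hj' hv).
Qed.

Lemma nat_subseq (k : nat -> nat) :
  exists phi : nat -> nat, forall n, (phi n < phi n.+1)%N /\
     (k (phi n) <= k (phi n.+1))%N.
Proof.
have /(_ _) /cid hh := tail_min k.
pose h i := sval (hh i).
have hP i : (i < h i)%N /\ forall j', (i < j')%N -> (k (h i) <= k j')%N.
  exact: svalP (hh i).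
pose psi := fix psi n := if n is n'.+1 then h (psi n') else 0%N.
exists (fun n => psi n.+1) => n /=; split; first by case: (hP (psi n.+1)).
have [h1 h2] := hP (psi n); apply: h2.
have [h3 _] := hP (h (psi n)); apply: ltn_trans h1 h3.
Qed.

Lemma incr_mono (G : zmodType) (lt : rel G) : ordered_group lt ->
  forall f : nat -> G, (forall i, lt (f i) (f i.+1)) ->
  forall i j, (i < j)%N -> lt (f i) (f j).
Proof.
move=> og f hf i; elim=> [|j IH] //; rewrite ltnS leq_eqVlt => /orP[/eqP->//|/IH h].
exact: (og_trans og h (hf j)).
Qed.

Lemma no_incr (G : zmodType) (lt : rel G) : ordered_group lt ->
  forall nu, ratio_set lt nu ->
  forall f : nat -> G, (forall i, in_star nu (f i)) ->
  ~ (forall i, lt (f i) (f i.+1)).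
Proof.
move=> og; elim=> [|x nu IH] rs f hs hf.
  have e i : f i = 0.
    by case: (hs i) => [[|y s] [h ->]]; rewrite ?big_nil.
  by have := hf 0%N; rewrite !e (negbTE (og_irr og 0)).
move: rs => /= /andP[x0 rs].
have /(_ _) /cid hk := fun i => star_cons (hs i).
pose k i := sval (hk i).
have hkP i : in_star nu (f i - x *+ k i) := svalP (hk i).
have [phi hphi] := nat_subseq k.
apply: (IH rs (fun n => f (phi n) - x *+ k (phi n))) => [n|n]; first exact: hkP.
apply: contraNT (og_irr og (f (phi n))) => /(notlt_gle og) hle.
have [p1 p2] := hphi n.
have lt1 := incr_mono og hf p1.
set a := phi n in hle lt1 p2 *; set b := phi n.+1 in hle lt1 p2 *.
have eb : f b = x *+ k a + (x *+ (k b - k a) + (f b - x *+ k b)).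
  by rewrite addrA -mulrnDr subnKC // addrC subrK.
have ea : f a = x *+ k a + (0 + (f a - x *+ k a)).
  by rewrite add0r addrC subrK.
have : gle lt (f b) (f a).
  rewrite eb ea; apply: (gle_add og (gle_refl _ _)).
  apply: (gle_add og _ hle); apply: (star_le0 og (mu := [:: x])) => //=.
    by rewrite /ratio_set /= x0.
  by apply: star_natmul; apply: star1; rewrite inE eqxx.
by move=> /(gle_lt_trans og) /(_ lt1); rewrite (negbTE (og_irr og _)).
Qed.

Lemma cone_max (G : zmodType) (lt : rel G) : ordered_group lt ->
  forall nu M (X : set G), ratio_set lt nu ->
  (forall g, X g -> in_star nu (g - M)) -> (exists g, X g) ->
  exists2 x, X x & forall y, X y -> gle lt y x.
Proof.
move=> og nu M X rs hX [x0 Xx0].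
apply: contrapT => hn.
have hnext : forall x, exists y, X x -> X y /\ lt x y.
  move=> x; have [Xx|nXx] := pselect (X x); last by exists x.
  apply: contrapT => hy; apply: hn; exists x => // y Xy.
  apply: (notlt_gle og); apply/negP => lxy; apply: hy; exists y => _; split => //.
have /(_ _) /cid hn2 := hnext.
pose nx x := sval (hn2 x).
have nxP x : X x -> X (nx x) /\ lt x (nx x) := svalP (hn2 x).
pose f n := iter n nx x0.
have Xf n : X (f n) by elim: n => [|n IH] //=; case: (nxP _ IH).
apply: (no_incr og rs (f := fun n => f n - M)) => [n|n]; first exact: hX.
by rewrite og_addrE //; case: (nxP _ (Xf n)).
Qed.

Lemma seq_max (G : zmodType) (lt : rel G) : ordered_group lt ->
  forall (ms : seq G) m0, m0 \in ms -> exists2 M, M \in ms & forall m, m \in ms -> gle lt m M.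
Proof.
move=> og; elim=> [|a ms IH] // m0 _.
case: ms IH => [|b ms] IH.
  by exists a; rewrite ?inE ?eqxx // => m; rewrite inE => /eqP->; apply: gle_refl.
have [M Mi hM] := IH b (mem_head _ _).
have [aM|] := boolP (lt a M).
  exists M; first by rewrite inE Mi orbT.
  by move=> m; rewrite inE => /orP[/eqP->|/hM//]; rewrite /gle aM.
move=> /(notlt_gle og) Ma; exists a; first exact: mem_head.
by move=> m; rewrite inE => /orP[/eqP->|/hM h]; [apply: gle_refl| exact: (gle_trans og h Ma)].
Qed.

Lemma grid_max (G : zmodType) (lt : rel G) : ordered_group lt ->
  forall nu (ms : seq G) (X : set G), ratio_set lt nu ->
  (forall g, X g -> exists2 m, m \in ms & in_star nu (g - m)) -> (exists g, X g) ->
  exists2 x, X x & forall y, X y -> gle lt y x.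
Proof.
move=> og nu ms X rs hX [g0 Xg0].
have [m0 m0i _] := hX g0 Xg0.
have [M Mi hM] := seq_max og m0i.
pose nu2 := nu ++ [seq m - M | m <- ms & lt m M].
apply: (cone_max og (nu := nu2) (M := M)) => //; last by exists g0.
  rewrite /ratio_set all_cat rs /=; apply/allP => y /mapP [m].
  by rewrite mem_filter => /andP[mM _] ->; rewrite og_sub0.
move=> g /hX [m mi hm].
have -> : g - M = (g - m) + (m - M) by rewrite addrA subrK.
apply: starD; first by apply: star_sub hm => y yi; rewrite mem_cat yi.
case/orP: (hM m mi) => [mM|/eqP->]; last by rewrite subrr; apply: star0.
by apply: star1; rewrite mem_cat; apply/orP; right; apply/mapP; exists m => //; rewrite mem_filter mM.
Qed.

Local Open Scope classical_set_scope.



Lemma mul_nz_pair (G : zmodType) (R : realType) (X Y : G -> R) g :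
  ser_mul X Y g != 0 -> exists p1 p2, [/\ p1 + p2 = g, X p1 != 0 & Y p2 != 0].
Proof.
apply: contraNP => hn; apply/eqP; rewrite /ser_mul fsbig1 // => p /= e.
apply: contrapT => /eqP; rewrite mulf_eq0 negb_or => /andP[h1 h2].
by apply: hn; exists p.1, p.2.
Qed.

Lemma mul_unique (G : zmodType) (R : realType) (X Y : G -> R) p1 p2 :
  X p1 != 0 -> Y p2 != 0 ->
  (forall q1 q2, q1 + q2 = p1 + p2 -> X q1 != 0 -> Y q2 != 0 -> q1 = p1) ->
  ser_mul X Y (p1 + p2) != 0.
Proof.
move=> h1 h2 hu; rewrite /ser_mul fsbig_supp.
have -> : [set p : G * G | p.1 + p.2 = p1 + p2] `&`
    (fun p : G * G => X p.1 * Y p.2) @^-1` [set~ 0] = [set (p1, p2)].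
  apply/seteqP; split => [[q1 q2] /= [e]|[q1 q2] /= [-> ->]]; last first.
    by split=> //; apply/eqP; rewrite mulf_neq0.
  move=> /eqP; rewrite mulf_eq0 negb_or => /andP[k1 k2].
  have e1 := hu _ _ e k1 k2; subst q1.
  by congr pair; apply: (addrI p1).
by rewrite fsbig_set1 /= mulf_neq0.
Qed.

Lemma mag_spec (G : zmodType) (lt : rel G) (R : realType) (mu : seq G) (T : G -> R) :
  ordered_group lt -> grid_based lt T -> witnesses lt mu T ->
  T (mag lt T) != 0 /\ forall n, T n != 0 -> in_star mu (n - mag lt T).
Proof.
move=> og [ms [nu [rs hg]]] [[g0 hg0] hw]; split => //.
have [m Tm hm] := grid_max og (X := fun g => T g != 0) rs hg (ex_intro _ g0 hg0).
have : exists x, is_mag lt T x.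
  by exists m; split => // n /hm.
by move=> /(xgetPex 0) [].
Qed.

Lemma main_gen (G : zmodType) (lt : rel G) (R : realType)
    (mu : seq G) (A B S : G -> R) (P : G -> Prop) :
  ordered_group lt ->
  ratio_set lt mu ->
  grid_based lt B -> grid_based lt S ->
  witnesses lt mu B \/ witnesses lt mu S ->
  (forall a b, P a -> in_star mu b -> P (a + b)) ->
  (forall a, A a != 0 -> exists b, B b != 0 /\ P (a - b)) ->
  (forall g, ser_mul A S g != 0 -> exists b, ser_mul B S b != 0 /\ P (g - b)).
Proof.
move=> og rs gB gS hw hP hAB g /mul_nz_pair [a [s [<- ha hs]]].
have [b [hb pab]] := hAB a ha.
case: hw => hw.
- have [hM hMw] := mag_spec og gB hw.
  set M := mag lt B in hM hMw.
  have [ms [nu [rsn hg]]] := gS.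
  have [s' [Ss' ss'] hs'] := grid_max og
     (X := fun t => S t != 0 /\ in_star mu (s - t)) rsn
     (fun g h => hg g h.1) (ex_intro _ s (conj hs (eq_ind_r _ (star0 mu) (subrr s)))).
  exists (M + s'); split.
    apply: mul_unique => // q1 q2 e k1 k2.
    have hd := hMw _ k1.
    have eq2 : q2 = s' - (q1 - M).
      by rewrite opprB addrA (addrC s') -e addrC addKr.
    have l1 : gle lt q2 s'.
      apply: hs'; split => //; rewrite eq2 opprB addrCA addrC.
      exact: starD.
    have l2 : gle lt s' q2.
      have := gle_add og (gle_refl lt q2) (star_le0 og rs hd).
      by rewrite eq2 subrK addr0.
    have e2 := gle_antisym og l1 l2.
    by apply: (addIr q2); rewrite e e2 addrC.
  have -> : a + s - (M + s') = (a - b) + ((b - M) + (s - s')).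
    by rewrite (addrACA b) -opprD [in RHS]addrA (addrA (a - b)) subrK.
  by apply: hP => //; apply: starD => //; apply: hMw.
- have [hM hMw] := mag_spec og gS hw.
  set M := mag lt S in hM hMw.
  have [ms [nu [rsn hg]]] := gB.
  have [b' [Bb' bb'] hb'] := grid_max og
     (X := fun t => B t != 0 /\ in_star mu (b - t)) rsn
     (fun g h => hg g h.1) (ex_intro _ b (conj hb (eq_ind_r _ (star0 mu) (subrr b)))).
  exists (b' + M); split.
    apply: mul_unique => // q1 q2 e k1 k2.
    have hd := hMw _ k2.
    have eq1 : q1 = b' - (q2 - M).
      by rewrite opprB addrA -e addrK.
    have l1 : gle lt q1 b'.
      apply: hb'; split => //; rewrite eq1 opprB addrCA addrC.
      exact: starD.
    have l2 : gle lt b' q1.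
      have := gle_add og (gle_refl lt q1) (star_le0 og rs hd).
      by rewrite eq1 subrK addr0.
    exact: (gle_antisym og l1 l2).
  have -> : a + s - (b' + M) = (a - b) + ((b - b') + (s - M)).
    by rewrite (addrACA b) -opprD [in RHS]addrA (addrA (a - b)) subrK.
  by apply: hP => //; apply: starD => //; apply: hMw.
Qed.

Local Close Scope classical_set_scope.

Theorem proposition3p6 (G : zmodType) (lt : rel G) (R : realType)
    (mu : seq G) (A B S : G -> R) :
  ordered_group lt ->
  ratio_set lt mu ->
  grid_based lt A -> grid_based lt B -> grid_based lt S ->
  witnesses lt mu B \/ witnesses lt mu S ->
  (slt mu A B -> slt mu (ser_mul A S) (ser_mul B S)) /\
  (sle mu A B -> sle mu (ser_mul A S) (ser_mul B S)).
Proof.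
move=> og rs _ gB gS hw; split => h.
  by apply: (main_gen og rs gB gS hw) => // a b; apply: plusD.
by apply: (main_gen og rs gB gS hw) => // a b; apply: starD.
Qed.
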